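(* Let $f:\mathbb{R}^p\times\mathbb{R}^N\to\mathbb{R}$ be differentiable with $M$-Lipschitz joint gradient, i.e. there is $M>0$ with $\|(\nabla_xf(x_1,z_1)-\nabla_xf(x_2,z_2),\nabla_zf(x_1,z_1)-\nabla_zf(x_2,z_2))\|\le M\|(x_1-x_2,z_1-z_2)\|$ for all $x_1,x_2,z_1,z_2$, and let $g:\mathbb{R}^p\to\mathbb{R}\cup\{\infty\}$ and $h:\mathbb{R}^N\to\mathbb{R}\cup\{\infty\}$ be proper, lower semicontinuous and directionally differentiable. Let $x_t\in\mathbb{R}^p$, $z_t\in\mathbb{R}^N$, $\eta_t^x,\eta_t^z>0$, and $$x_{t+1}\in\operatorname{Prox}_{g/\eta_t^x}\Big(x_t-\tfrac1{\eta_t^x}\nabla_xf(x_t,z_t)\Big),\qquad z_{t+1}\in\operatorname{Prox}_{h/\eta_t^z}\Big(z_t-\tfrac1{\eta_t^z}\nabla_zf(x_{t+1},z_t)\Big).$$ Define $\epsilon_t^x:=\eta_t^x(x_{t+1}-x_t)+\nabla_xf(x_t,z_t)-\nabla_xf(x_{t+1},z_{t+1})$ and $\epsilon_t^z:=\eta_t^z(z_{t+1}-z_t)+\nabla_zf(x_{t+1},z_t)-\nabla_zf(x_{t+1},z_{t+1})$. Then for all $d_x\in\mathbb{R}^p$, $d_z\in\mathbb{R}^N$, $$-\|\epsilon_t^x\|\|d_x\|-\|\epsilon_t^z\|\|d_z\|\le g'(x_{t+1};d_x)+h'(z_{t+1};d_z)+\langle\nabla_xf(x_{t+1},z_{t+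1}),d_x\rangle+\langle\nabla_zf(x_{t+1},z_{t+1}),d_z\rangle.$$
   Context: $\|\cdot\|$ is the Euclidean norm. $\operatorname{Prox}_{\phi/\eta}(y):=\operatorname{argmin}_{u}\{\tfrac1\eta\phi(u)+\tfrac12\|u-y\|^2\}$. The directional derivative is $\phi'(u;d):=\lim_{\tau\to+0}\frac{\phi(u+\tau d)-\phi(u)}{\tau}$ (possibly $+\infty$); directionally differentiable means this limit exists for all $d$ and all $u\in\operatorname{dom}\phi$. *)

(* Defs.v *)
From HB Require Import structures.
From mathcomp Require Import all_boot all_order all_algebra.
From mathcomp Require Import all_classical all_reals all_analysis.
Set Implicit Arguments. Unset Strict Implicit. Unset Printing Implicit Defensive.
Import Order.TTheory GRing.Theory Num.Theory.
Import numFieldNormedType.Exports.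
Local Open Scope ring_scope.
Local Open Scope classical_set_scope.

Section Defs.
Variable R : realType.

Definition vdot n (u v : 'rV[R]_n) : R := \sum_(i < n) u ord0 i * v ord0 i.
Definition vnorm n (v : 'rV[R]_n) : R := Num.sqrt (vdot v v).
Definition pnorm p N (u : 'rV[R]_p) (v : 'rV[R]_N) : R :=
  Num.sqrt (vdot u u + vdot v v).

Definition has_grad p N (f : 'rV[R]_p -> 'rV[R]_N -> R)
  (gx : 'rV[R]_p -> 'rV[R]_N -> 'rV[R]_p) (gz : 'rV[R]_p -> 'rV[R]_N -> 'rV[R]_N) :=
  forall x z, forall eps : R, 0 < eps -> exists2 delta : R, 0 < delta &
    forall (hx : 'rV[R]_p) (hz : 'rV[R]_N), pnorm hx hz < delta ->
      `| f (x + hx) (z + hz) - f x z - vdot (gx x z) hx - vdot (gz x z) hz |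
        <= eps * pnorm hx hz.

Definition proper_fun n (g : 'rV[R]_n -> \bar R) :=
  (forall x, g x != -oo%E) /\ exists x, g x \is a fin_num.

Definition lsc n (g : 'rV[R]_n -> \bar R) :=
  forall x (a : R), (a%:E < g x)%E -> exists2 delta : R, 0 < delta &
    forall y, vnorm (y - x) < delta -> (a%:E < g y)%E.

Definition dquot n (g : 'rV[R]_n -> \bar R) (u d : 'rV[R]_n) (tau : R) : \bar R :=
  ((g (u + tau *: d)%R - g u) * (tau^-1)%:E)%E.

Definition dirder n (g : 'rV[R]_n -> \bar R) (u d : 'rV[R]_n) : \bar R :=
  lim (dquot g u d tau @[tau --> 0^'+]).

Definition dir_diff n (g : 'rV[R]_n -> \bar R) :=
  forall u d, g u \is a fin_num ->
    exists l : \bar R, dquot g u d tau @[tau --> 0^'+] --> l.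

Definition in_prox n (g : 'rV[R]_n -> \bar R) (eta : R) (y x : 'rV[R]_n) :=
  forall u, (eta^-1%:E * g x + (2^-1 * vnorm (x - y) ^+ 2)%:E
             <= eta^-1%:E * g u + (2^-1 * vnorm (u - y) ^+ 2)%:E)%E.

End Defs.

(* Main.v *)
Require Import Defs.
From HB Require Import structures.
From mathcomp Require Import all_boot all_order all_algebra.
From mathcomp Require Import all_classical all_reals all_analysis.
From mathcomp Require Import lra.
Import Order.TTheory GRing.Theory Num.Theory.
Import numFieldNormedType.Exports.
Local Open Scope ring_scope.

Section Aux.
Variable R : realType.
Variable n : nat.
Implicit Types u v w : 'rV[R]_n.

Lemma vdotDl u v w : vdot (u + v) w = vdot u w + vdot v w.
Proof. by rewrite /vdot -big_split /=; apply: eq_bigr => i _; rewrite mxE mulrDl. Qed.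
Lemma vdotZl (a : R) u w : vdot (a *: u) w = a * vdot u w.
Proof. by rewrite /vdot mulr_sumr; apply: eq_bigr => i _; rewrite mxE mulrA. Qed.
Lemma vdotC u v : vdot u v = vdot v u.
Proof. by rewrite /vdot; apply: eq_bigr => i _; rewrite mulrC. Qed.
Lemma vdotNl u w : vdot (- u) w = - vdot u w.
Proof. by rewrite -scaleN1r vdotZl mulN1r. Qed.
Lemma vdotBl u v w : vdot (u - v) w = vdot u w - vdot v w.
Proof. by rewrite vdotDl vdotNl. Qed.
Lemma vdotDr u v w : vdot w (u + v) = vdot w u + vdot w v.
Proof. by rewrite vdotC vdotDl !(vdotC w). Qed.
Lemma vdotZr (a : R) u w : vdot w (a *: u) = a * vdot w u.
Proof. by rewrite vdotC vdotZl vdotC. Qed.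
Lemma vdot_ge0 u : 0 <= vdot u u.
Proof. by apply: sumr_ge0 => i _; rewrite -expr2 sqr_ge0. Qed.
Lemma vnorm2 u : vnorm u ^+ 2 = vdot u u.
Proof. by rewrite /vnorm sqr_sqrtr // vdot_ge0. Qed.

Lemma vdot0 u w : vdot u u = 0 -> vdot u w = 0.
Proof.
move=> H.
have H0 := psumr_eq0P (fun i (_ : true) => (_ : 0 <= u ord0 i * u ord0 i)) H.
rewrite /vdot big1 // => i _.
have /eqP := H0 (fun i => sqr_ge0 (u ord0 i)) i isT.
by rewrite mulf_eq0 orbb => /eqP ->; rewrite mul0r.
Qed.

Lemma cs u v : vdot u v <= vnorm u * vnorm v.
Proof.
set a := vnorm u; set b := vnorm v.
have a0 : 0 <= a by rewrite /a /vnorm sqrtr_ge0.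
have b0 : 0 <= b by rewrite /b /vnorm sqrtr_ge0.
have [ab0|abpos] := eqVneq (a * b) 0.
  move/eqP: ab0; rewrite mulf_eq0 => /orP[] /eqP H.
  - have : vdot u u = 0 by rewrite -vnorm2 -/a H expr0n.
    by move/(@vdot0 _ v) ->; rewrite H mul0r.
  - have : vdot v v = 0 by rewrite -vnorm2 -/b H expr0n.
    by move/(@vdot0 _ u); rewrite vdotC => ->; rewrite H mulr0.
have := vdot_ge0 (b *: u - a *: v).
rewrite !vdotBl -!(vdotC (_ - _)) !vdotBl !vdotZl !vdotZr.
rewrite -!vnorm2 -/a -/b (vdotC v u).
move=> H.
have abp : 0 < a * b by rewrite lt0r abpos mulr_ge0.
have : 0 <= (a * b) * (2 * (a * b - vdot u v)).
  move: H; nra.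
rewrite pmulr_rge0 //; lra.
Qed.
End Aux.

Lemma key (R : realType) n (g : 'rV[R]_n -> \bar R) eta y x d :
  0 < eta -> proper_fun g -> dir_diff g -> in_prox g eta y x ->
  ((- vdot (eta *: (x - y)) d)%:E <= dirder g x d)%E.
Proof.
move=> eta0 [ninf [u0 fu0]] dd P.
have ieta0 : 0 < eta^-1 by rewrite invr_gt0.
have [r' Er'] : exists r', g u0 = r'%:E.
  by move: fu0; case: (g u0) => // r' _; exists r'.
have gxfin : g x \is a fin_num.
  move: (P u0) (ninf x); rewrite Er'; case: (g x) => [r| |] //= P1 _.
  move: P1; rewrite muleC gt0_mulye ?lte_fin //.
  idtac.
have [gx0 Egx] : exists r, g x = r%:E.
  by move: gxfin; case: (g x) => // r'' _; exists r''.
have [l Hl] := dd x d gxfin.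
rewrite /dirder (cvg_lim _ Hl) //.
apply/lee_addgt0Pr => e e0.
set r := - vdot (eta *: (x - y)) d.
set B := vdot d d.
have B0 : 0 <= B by apply: vdot_ge0.
suff H : ((r - e)%:E <= l)%E.
  by have := leeD H (lexx e%:E); rewrite -EFinD subrK.
apply: (cvge_to_ge Hl).
have K0 : 0 < eta * B + 1 by rewrite ltr_pwDr // mulr_ge0 // ltW.
near=> t.
have t0 : 0 < t by near: t; exact: nbhs_right_gt.
have tK : t * (eta * B + 1) < 2 * e.
  rewrite -ltr_pdivlMr //; near: t; apply: nbhs_right_lt.
  by rewrite divr_gt0 // mulr_gt0.
rewrite /dquot Egx.
move: (P (x + t *: d)) (ninf (x + t *: d)).
case: (g (x + t *: d)) => [s| |] //= P1 _.
  rewrite Egx -!EFinM -!EFinD lee_fin in P1.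
  rewrite -EFinM lee_fin ler_pdivlMr //.
  rewrite /r !vnorm2 in P1 *. move: P1.
  set w := x - y.
  have -> : x + t *: d - y = w + t *: d by rewrite /w addrAC.
  clearbody w.
  rewrite !vdotDl !vdotDr !vdotZl !vdotZr.
  rewrite -/B (vdotC _ _ d).
  set c := vdot w d.
  set A := vdot w w.
  move=> P1.
  have P2 : gx0 - s <= eta * (t * c + t * t * B / 2).
    have Ea : gx0 = eta * (eta^-1 * gx0) by rewrite mulrA mulfV ?gt_eqF // mul1r.
    have Eb : s = eta * (eta^-1 * s) by rewrite mulrA mulfV ?gt_eqF // mul1r.
    rewrite Ea Eb.
    move: P1; set a := eta^-1 * gx0; set b := eta^-1 * s => P1.
    nra.
  have H3 : t * (t * (eta * B + 1)) <= t * (2 * e) by rewrite ler_pM2l // ltW.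
  nra.
by rewrite addye // gt0_mulye ?lte_fin ?invr_gt0 // leey.
Unshelve. all: by end_near.
Qed.

Lemma shift (R : realType) n (eta : R) (a b G G' : 'rV[R]_n) : 0 < eta ->
  eta *: (a - (b - eta^-1 *: G)) = (eta *: (a - b) + G - G') + G'.
Proof.
move=> e0; rewrite subrK opprB !scalerDr scalerA mulfV ?gt_eqF // scale1r.
by rewrite -addrA (addrC G).
Qed.

Theorem lemma2 (R : realType) (p N : nat)
  (f : 'rV[R]_p -> 'rV[R]_N -> R)
  (gx : 'rV[R]_p -> 'rV[R]_N -> 'rV[R]_p) (gz : 'rV[R]_p -> 'rV[R]_N -> 'rV[R]_N)
  (M : R) (g : 'rV[R]_p -> \bar R) (h : 'rV[R]_N -> \bar R)
  (xt x1 : 'rV[R]_p) (zt z1 : 'rV[R]_N) (etax etaz : R) :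
  has_grad f gx gz ->
  0 < M ->
  (forall x1' x2' z1' z2',
      pnorm (gx x1' z1' - gx x2' z2') (gz x1' z1' - gz x2' z2')
        <= M * pnorm (x1' - x2') (z1' - z2')) ->
  proper_fun g -> lsc g -> dir_diff g ->
  proper_fun h -> lsc h -> dir_diff h ->
  0 < etax -> 0 < etaz ->
  in_prox g etax (xt - etax^-1 *: gx xt zt) x1 ->
  in_prox h etaz (zt - etaz^-1 *: gz x1 zt) z1 ->
  let epsx := etax *: (x1 - xt) + gx xt zt - gx x1 z1 in
  let epsz := etaz *: (z1 - zt) + gz x1 zt - gz x1 z1 in
  forall (dx : 'rV[R]_p) (dz : 'rV[R]_N),
    ((- (vnorm epsx * vnorm dx) - vnorm epsz * vnorm dz)%:E
      <= dirder g x1 dx + dirder h z1 dz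
         + (vdot (gx x1 z1) dx)%:E + (vdot (gz x1 z1) dz)%:E)%E.
Proof.
move=> _ _ _ pg _ dg ph _ dh ex ez Pg Ph epsx epsz dx dz.
have Hg := @key _ _ _ _ _ _ dx ex pg dg Pg.
have Hh := @key _ _ _ _ _ _ dz ez ph dh Ph.
rewrite (@shift _ _ _ _ _ _ (gx x1 z1) ex) -/epsx in Hg.
rewrite (@shift _ _ _ _ _ _ (gz x1 z1) ez) -/epsz in Hh.
apply: le_trans (leeD (leeD (leeD Hg Hh) (lexx (vdot (gx x1 z1) dx)%:E)) (lexx (vdot (gz x1 z1) dz)%:E)).
clearbody epsx epsz. rewrite -!EFinD lee_fin !vdotDl.
have := @cs _ _ epsx dx; have := @cs _ _ epsz dz. lra.
Qed.
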